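(* Let $G$ be a concurrent game structure, $T\subseteq S$, with all states of $T\cup W_2$ absorbing. Let $\xi_1^{\mathrm{unif}}$ be the player-1 selector that at every state $s\in S\setminus(T\cup W_2)$ chooses all moves in $\Gamma_1(s)$ uniformly at random. Then $\xi_1^{\mathrm{unif}}$ is proper.
   Context: Concurrent game structure $G=(S,M,\Gamma_1,\Gamma_2,\delta)$: finite states $S$, finite moves $M$, nonempty move sets $\Gamma_i(s)\subseteq M$, transition probabilities $\delta(s,a_1,a_2)\in\mathrm{Distr}(S)$ (moves chosen simultaneously and independently). A state is absorbing if every move pair leads back to it with probability 1. A selector for player $i$ assigns to each state $s$ a distribution on $\Gamma_i(s)$; $\overline{\xi}$ is the memoryless strategy playing $\xi$ at every step. $\Pr_s^{\pi_1,\pi_2}$ is the measure on plays from $s$ induced by strategies $\pi_1,\pi_2$. $\mathrm{Reach}(X)$: plays visiting $X$. $\mathrm{val}_1(\mathrm{Reach}(T))(s)=\sup_{\pi_1}\inf_{\pi_2}\Pr_s^{\pi_1,\pi_2}(\mathrm{Reach}(T))$, $W_2=\{s:\mathrm{val}_1(\mathrm{Reach}(T))(s)=0\}$. A player-1 strategy $\pi_1$ is proper if for every player-2 strategy $\pi_2$ and all $s\in S\setminus(T\cup W_2)$, $\Pr_s^{\pi_1,\pi_2}(\mathrm{Reach}(T\cup W_2))=1$; a selector $\xi_1$ is proper if $\overline{\xi}_1$ is proper. *)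

(* Defs.v *)
From HB Require Import structures.
From mathcomp Require Import all_boot all_order all_algebra.
From mathcomp Require Import boolp classical_sets reals.
Set Implicit Arguments. Unset Strict Implicit. Unset Printing Implicit Defensive.
Import Order.TTheory GRing.Theory Num.Theory.
Local Open Scope ring_scope.
Local Open Scope classical_set_scope.

Section Games.
Variables (R : realType) (S M : finType).

Record cgs := CGS {
  Gamma1 : S -> {set M};
  Gamma2 : S -> {set M};
  delta : S -> M -> M -> S -> R }.

Definition cgs_valid (G : cgs) : Prop :=
  (forall s, Gamma1 G s != finset.set0) /\ (forall s, Gamma2 G s != finset.set0) /\
  (forall s a1 a2 s', 0 <= delta G s a1 a2 s') /\
  (forall s a1 a2, \sum_(s' : S) delta G s a1 a2 s' = 1).

Definition absorbing (G : cgs) (s : S) : Prop :=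
  forall a1 a2, a1 \in Gamma1 G s -> a2 \in Gamma2 G s -> delta G s a1 a2 s = 1.

Definition move_distr (A : {set M}) (d : M -> R) : Prop :=
  (forall a, 0 <= d a) /\ (forall a, a \notin A -> d a = 0) /\
  \sum_(a : M) d a = 1.

(* A (general, randomized, history-dependent) strategy: the history is the
   nonempty sequence of states s0 :: r; its current state is last s0 r. *)
Definition strategy := S -> seq S -> M -> R.

Definition strategy_valid (Gam : S -> {set M}) (pi : strategy) : Prop :=
  forall s0 r, move_distr (Gam (last s0 r)) (pi s0 r).

Definition selector := S -> M -> R.

Definition selector_valid (Gam : S -> {set M}) (xi : selector) : Prop :=
  forall s, move_distr (Gam s) (xi s).

Definition memoryless (xi : selector) : strategy := fun s0 r => xi (last s0 r).

Section Measure.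
Variables (G : cgs) (pi1 pi2 : strategy).

Definition step_prob (s0 : S) (r : seq S) (x : S) : R :=
  \sum_(a1 : M) \sum_(a2 : M)
     pi1 s0 r a1 * pi2 s0 r a2 * delta G (last s0 r) a1 a2 x.

Fixpoint path_prob (s0 : S) (r : seq S) (t : seq S) : R :=
  match t with
  | [::] => 1
  | x :: t' => step_prob s0 r x * path_prob s0 (rcons r x) t'
  end.

Definition reach_within (X : {set S}) (s : S) (n : nat) : R :=
  \sum_(t : n.-tuple S)
     (if has (fun x => x \in X) (s :: val t) then path_prob s [::] t else 0).

(* Pr_s^{pi1,pi2}(Reach X): Reach X is the increasing union of the events
   "visit X within n steps", so its measure is the supremum of these. *)
Definition Pr_reach (X : {set S}) (s : S) : R :=
  sup (range (reach_within X s)).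
End Measure.

Definition val1_reach (G : cgs) (T : {set S}) (s : S) : R :=
  sup [set inf [set Pr_reach G pi1 pi2 T s | pi2 in strategy_valid (Gamma2 G)]
       | pi1 in strategy_valid (Gamma1 G)].

Definition W2 (G : cgs) (T : {set S}) : {set S} :=
  [set s | val1_reach G T s == 0].

Definition proper (G : cgs) (T : {set S}) (pi1 : strategy) : Prop :=
  forall pi2, strategy_valid (Gamma2 G) pi2 ->
  forall s, s \notin T :|: W2 G T ->
    Pr_reach G pi1 pi2 (T :|: W2 G T) s = 1.

Definition proper_selector (G : cgs) (T : {set S}) (xi : selector) : Prop :=
  proper G T (memoryless xi).

End Games.

(* Main.v *)
Require Import Defs.
From HB Require Import structures.
From mathcomp Require Import all_boot all_order all_algebra.
From mathcomp Require Import boolp classical_sets reals.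
From mathcomp Require Import ring lra.
Import Order.TTheory GRing.Theory Num.Theory.
Local Open Scope ring_scope.
Set Implicit Arguments. Unset Strict Implicit. Unset Printing Implicit Defensive.

Lemma big_tuple_cons (R : realType) (S : finType) (h : seq S -> R) n :
  \sum_(t : n.+1.-tuple S) h t = \sum_(x : S) \sum_(t : n.-tuple S) h (x :: t).
Proof.
rewrite pair_big /=.
rewrite (reindex (fun p : S * n.-tuple S => [tuple of p.1 :: p.2])) /=.
  by apply: eq_bigr => -[x t].
exists (fun t : n.+1.-tuple S => (thead t, [tuple of behead t])).
  by move=> [x t] _; congr pair; apply: val_inj.
move=> t _; apply: val_inj => /=.
by case: t => -[|x s] //=.
Qed.

Lemma big_tuple0 (R : realType) (S : finType) (h : seq S -> R) :
  \sum_(t : 0.-tuple S) h t = h [::].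
Proof.
rewrite (big_pred1 [tuple]) // => t /=; apply/esym/eqP; apply/eqP.
by rewrite [t]tuple0.
Qed.

Arguments big_tuple_cons {R S}.
Arguments big_tuple0 {R S}.
Section Gen.
Variables (R : realType) (S M : finType) (G : cgs R S M) (pi1 pi2 : strategy R S M).
Hypotheses (HG : cgs_valid G) (H1 : strategy_valid (Gamma1 G) pi1)
  (H2 : strategy_valid (Gamma2 G) pi2).

Lemma step_ge0 s0 r x : 0 <= step_prob G pi1 pi2 s0 r x.
Proof.
case: HG => _ [_ [Hd _]].
have [P1 _] := H1 s0 r; have [P2 _] := H2 s0 r.
by apply: sumr_ge0 => a1 _; apply: sumr_ge0 => a2 _; rewrite !mulr_ge0.
Qed.

Lemma step_sum s0 r : \sum_x step_prob G pi1 pi2 s0 r x = 1.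
Proof.
case: HG => _ [_ [_ Hs]].
have [_ [_ S1]] := H1 s0 r; have [_ [_ S2]] := H2 s0 r.
rewrite /step_prob exchange_big /= -S1; apply: eq_bigr => a1 _.
rewrite exchange_big /=.
transitivity (\sum_a2 pi1 s0 r a1 * pi2 s0 r a2).
  apply: eq_bigr => a2 _; by rewrite -mulr_sumr Hs mulr1.
by rewrite -mulr_sumr S2 mulr1.
Qed.

Lemma path_ge0 s0 t r : 0 <= path_prob G pi1 pi2 s0 r t.
Proof. elim: t r => [|x t IH] r /=; first exact: ler01. by rewrite mulr_ge0 ?step_ge0. Qed.

Lemma path_sum s0 n r : \sum_(t : n.-tuple S) path_prob G pi1 pi2 s0 r t = 1.
Proof.
elim: n r => [|n IH] r; first by rewrite (big_tuple0 (fun t => path_prob G pi1 pi2 s0 r t)).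
rewrite (big_tuple_cons (fun t => path_prob G pi1 pi2 s0 r t)) /= -(step_sum s0 r).
by apply: eq_bigr => x _; rewrite -mulr_sumr IH mulr1.
Qed.

Definition Aw (X : {set S}) s0 r n :=
  \sum_(t : n.-tuple S) (if ~~ has (fun x => x \in X) (last s0 r :: t)
                          then path_prob G pi1 pi2 s0 r t else 0).

Lemma Aw0 X s0 r : Aw X s0 r 0 = if last s0 r \in X then 0 else 1.
Proof.
rewrite /Aw (big_tuple0 (fun t => if ~~ has (fun x => x \in X) (last s0 r :: t)
                          then path_prob G pi1 pi2 s0 r t else 0)) /=.
by rewrite orbF; case: (last s0 r \in X).
Qed.

Lemma AwS X s0 r n : Aw X s0 r n.+1 = if last s0 r \in X then 0
   else \sum_x step_prob G pi1 pi2 s0 r x * Aw X s0 (rcons r x) n.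
Proof.
rewrite /Aw (big_tuple_cons (fun t => if ~~ has (fun x => x \in X) (last s0 r :: t)
                          then path_prob G pi1 pi2 s0 r t else 0)) /=.
case: (last s0 r \in X) => /=.
  by apply: big1 => x _; apply: big1.
apply: eq_bigr => x _; rewrite mulr_sumr; apply: eq_bigr => t _.
rewrite last_rcons /=; case: ifP => _; by rewrite ?mulr0.
Qed.

Lemma Aw_ge0 X s0 r n : 0 <= Aw X s0 r n.
Proof. by apply: sumr_ge0 => t _; case: ifP => _ //; apply: path_ge0. Qed.

Lemma Aw_le1 X s0 r n : Aw X s0 r n <= 1.
Proof.
rewrite -(path_sum s0 n r); apply: ler_sum => t _.
by case: ifP => _ //; apply: path_ge0.
Qed.

Lemma reach_Aw X s n : reach_within G pi1 pi2 X s n = 1 - Aw X s [::] n.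
Proof.
rewrite -(path_sum s n [::]) /Aw -sumrB /reach_within; apply: eq_bigr => t _ /=.
by case: ifP => _ /=; rewrite ?subr0 ?subrr.
Qed.

Lemma Aw_mul X s0 n c : 0 <= c -> (forall r, Aw X s0 r n <= c) ->
  forall m r, Aw X s0 r (m + n) <= c * Aw X s0 r m.
Proof.
move=> c0 Hc; elim=> [|m IH] r.
  rewrite add0n Aw0; case: ifP => Hx; rewrite ?mulr1 ?mulr0 //.
  by case: (n) => [|k]; rewrite ?Aw0 ?AwS Hx.
rewrite addSn !AwS; case: ifP => _; first by rewrite mulr0.
rewrite mulr_sumr; apply: ler_sum => x _.
by rewrite mulrCA ler_wpM2l ?step_ge0.
Qed.

End Gen.

Section Trap.
Variables (R : realType) (S M : finType) (G : cgs R S M) (T : {set S}).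
Hypothesis HG : cgs_valid G.

Definition Xs := T :|: W2 G T.
Definition Pre (Y : {set S}) : {set S} :=
  [set s | [forall a2 in Gamma2 G s, exists a1 in Gamma1 G s,
             exists x in Y, delta G s a1 a2 x != 0]].
Definition Fm (Y : {set S}) := Xs :|: Y :|: Pre Y.

Lemma Fm_mono : {homo Fm : A B / A \subset B}.
Proof.
move=> A B AB; rewrite /Fm; apply: (finset.setUSS (finset.setUS Xs AB)).
apply/fintype.subsetP => s; rewrite !inE => /forall_inP H; apply/forall_inP => a2 /H.
move=> /exists_inP [a1 Ha1 /exists_inP [x Hx Hd]]; apply/exists_inP; exists a1 => //.
by apply/exists_inP; exists x => //; apply: (fintype.subsetP AB).
Qed.

Definition Yf := fixset Fm.

Lemma YfK : Fm Yf = Yf.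
Proof. exact: (fixsetK Fm_mono). Qed.

Lemma X_Yf s (H : s \in Xs) : s \in Yf.
Proof. move: H; rewrite /Xs -YfK /Fm !finset.in_setU => /orP [] ->; by rewrite ?orbT. Qed.

Definition cond s a2 :=
  [forall a1 in Gamma1 G s, forall x in Yf, delta G s a1 a2 x == 0].

Definition ch s : option M :=
  if [pick a2 in Gamma2 G s | cond s a2] is Some a then Some a
  else [pick a in Gamma2 G s].

Definition xi2 : selector R S M := fun s a => (ch s == Some a)%:R.

Lemma ch_in s : exists2 b, ch s = Some b & b \in Gamma2 G s.
Proof.
case: HG => _ [HG2 _].
rewrite /ch; case: pickP => [b /andP [Hb _]|_]; first by exists b.
case: pickP => [b Hb|H]; first by exists b.
have /set0Pn [a Ha] := HG2 s; by move: (H a); rewrite Ha.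
Qed.

Lemma ch_cond s : s \notin Yf -> exists2 b, ch s = Some b & cond s b.
Proof.
move=> Hs; rewrite /ch; case: pickP => [b /andP [_ Hb]|Hn]; first by exists b.
exfalso; move/negP: Hs; apply; rewrite -YfK /Fm !inE; apply/orP; right.
apply/forall_inP => a2 Ha2; move: (Hn a2); rewrite Ha2 /= => /negbT.
move=> /forall_inPn [a1 Ha1 /forall_inPn [x Hx Hd]].
by apply/exists_inP; exists a1 => //; apply/exists_inP; exists x.
Qed.

Lemma xi2_valid : selector_valid (Gamma2 G) xi2.
Proof.
move=> s; have [b Hb Hbin] := ch_in s; rewrite /xi2 Hb; split; first by move=> a; exact: ler0n.
split.
  by move=> a Ha; case: eqP => // -[E]; move: Ha; rewrite -E Hbin.
rewrite (bigD1 b) //= eqxx big1 ?addr0 // => a Hab.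
by case: eqP => // -[E]; move: Hab; rewrite E eqxx.
Qed.

Lemma memoryless_valid (Gam : S -> {set M}) (xi : selector R S M) :
  selector_valid Gam xi -> strategy_valid Gam (memoryless xi).
Proof. by move=> H s0 r; exact: H. Qed.

Section P1.
Variable pi1 : strategy R S M.
Hypothesis H1 : strategy_valid (Gamma1 G) pi1.

Lemma step_trap s0 r x : last s0 r \notin Yf -> x \in Yf ->
  step_prob G pi1 (memoryless xi2) s0 r x = 0.
Proof.
move=> Hl Hx; have [b Hb Hc] := ch_cond Hl.
have [_ [P1 _]] := H1 s0 r.
apply: big1 => a1 _; apply: big1 => a2 _.
rewrite /memoryless /xi2 Hb.
have [<-|Hne] := eqVneq b a2; last by case: eqP => [[E]|_]; [move: Hne; rewrite E eqxx|rewrite mulr0 mul0r].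
case: (boolP (a1 \in Gamma1 G (last s0 r))) => Ha1; last by rewrite P1 // !mul0r.
by move/forall_inP: Hc => /(_ a1 Ha1) /forall_inP /(_ x Hx) /eqP ->; rewrite mulr0.
Qed.

Lemma path_trap s0 t r : last s0 r \notin Yf -> has (fun x => x \in Yf) t ->
  path_prob G pi1 (memoryless xi2) s0 r t = 0.
Proof.
elim: t r => [|x t IH] r //= Hl /orP [Hx|Ht]; first by rewrite step_trap // mul0r.
case: (boolP (x \in Yf)) => Hx; first by rewrite step_trap // mul0r.
by rewrite IH ?mulr0 // last_rcons.
Qed.

Lemma Pr_trap s : s \notin Yf -> Pr_reach G pi1 (memoryless xi2) T s = 0.
Proof.
move=> Hs; rewrite /Pr_reach.
have Z : forall n, reach_within G pi1 (memoryless xi2) T s n = 0.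
  move=> n; apply: big1 => t _; case: ifP => //= /orP [HT|HT].
    by exfalso; move/negP: Hs; apply; apply: X_Yf; rewrite /Xs finset.in_setU HT.
  apply: path_trap => //; apply: sub_has HT => x Hx; apply: X_Yf; by rewrite /Xs finset.in_setU Hx.
suff -> : range (reach_within G pi1 (memoryless xi2) T s) = [set (0:R)]%classic by rewrite sup1.
apply/seteqP; split=> y /=; last by move=> ->; exists 0%N.
by case=> n _ <-.
Qed.
End P1.

Lemma Pr_ge0 (pi1 pi2 : strategy R S M) X s :
  strategy_valid (Gamma1 G) pi1 -> strategy_valid (Gamma2 G) pi2 ->
  0 <= Pr_reach G pi1 pi2 X s.
Proof.
move=> H1 H2; rewrite /Pr_reach.
have Hub : has_ubound (range (reach_within G pi1 pi2 X s)).
  exists 1 => y [n _ <-]; by rewrite reach_Aw // lerBlDr lerDl Aw_ge0.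
have H0 : range (reach_within G pi1 pi2 X s) (reach_within G pi1 pi2 X s 0%N) by exists 0%N.
apply: le_trans (ub_le_sup Hub H0).
by rewrite reach_Aw // subr_ge0 Aw_le1.
Qed.

Lemma Yf_all (xi1 : selector R S M) : selector_valid (Gamma1 G) xi1 ->
  forall s, s \in Yf.
Proof.
move=> Hxi1 s; apply/negPn/negP => Hs.
suff: s \in Xs by move/X_Yf; rewrite (negbTE Hs).
rewrite /Xs finset.in_setU; apply/orP; right; rewrite /W2 inE; apply/eqP.
rewrite /val1_reach.
have Hinf : forall pi1, strategy_valid (Gamma1 G) pi1 ->
   inf [set Pr_reach G pi1 pi2 T s | pi2 in strategy_valid (Gamma2 G)]%classic = 0.
  move=> pi1 H1; apply/eqP; rewrite eq_le; apply/andP; split.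
    have Hlb : has_lbound [set Pr_reach G pi1 pi2 T s | pi2 in strategy_valid (Gamma2 G)]%classic.
      by exists 0 => y [pi2 H2 <-]; exact: Pr_ge0.
    have Hm : [set Pr_reach G pi1 pi2 T s | pi2 in strategy_valid (Gamma2 G)]%classic
                 (Pr_reach G pi1 (memoryless xi2) T s).
      by exists (memoryless xi2) => //; apply: memoryless_valid; exact: xi2_valid.
    by have := ge_inf Hlb Hm; rewrite Pr_trap.
  apply: lb_le_inf.
    by exists (Pr_reach G pi1 (memoryless xi2) T s); exists (memoryless xi2) => //;
       apply: memoryless_valid; exact: xi2_valid.
  by move=> y [pi2 H2 <-]; exact: Pr_ge0.
suff -> : [set inf [set Pr_reach G pi1 pi2 T s | pi2 in strategy_valid (Gamma2 G)]
       | pi1 in strategy_valid (Gamma1 G)]%classic = [set (0:R)]%classic by rewrite sup1.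
apply/seteqP; split=> y /=.
  by case=> pi1 H1 <-; apply: Hinf.
move=> ->; exists (memoryless xi1); first exact: memoryless_valid.
by apply: Hinf; exact: memoryless_valid.
Qed.

End Trap.

Lemma le_sum1 (R : realType) (I : finType) (F : I -> R) i :
  (forall j, 0 <= F j) -> F i <= \sum_j F j.
Proof. by move=> H; rewrite (bigD1 i) //= lerDl sumr_ge0. Qed.

Lemma bern (R : realType) (q : R) k : 0 <= q -> q <= 1 ->
  (1 + k%:R * q) * (1 - q) ^+ k <= 1.
Proof.
move=> q0 q1; elim: k => [|k IH]; first by rewrite mul0r addr0 expr0 mulr1.
have y0 : 0 <= (1 - q) ^+ k by rewrite exprn_ge0 // subr_ge0.
have k0 : 0 <= (k%:R : R) by exact: ler0n.
move: IH y0 k0; rewrite exprS -natr1.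
move: ((1 - q) ^+ k) (k%:R : R) => y kk IH y0 k0.
have E : (1 + (kk+1) * q) * ((1-q)*y) = (1 + kk * q) * y - (kk*q*q*y + q*q*y) by ring.
have h1 : 0 <= kk*q*q*y by rewrite !mulr_ge0.
have h2 : 0 <= q*q*y by rewrite !mulr_ge0.
rewrite E; lra.
Qed.

Section Main.
Variables (R : realType) (S M : finType) (G : cgs R S M) (T : {set S})
  (xi1 : selector R S M) (pi2 : strategy R S M).
Hypotheses (HG : cgs_valid G) (Hxi1 : selector_valid (Gamma1 G) xi1)
  (Hunif : forall s, s \notin T :|: W2 G T ->
     forall a, xi1 s a = if a \in Gamma1 G s then (#|Gamma1 G s|%:R)^-1 else 0)
  (H2 : strategy_valid (Gamma2 G) pi2).

Let pi1 := memoryless xi1.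
Let H1 : strategy_valid (Gamma1 G) pi1 := memoryless_valid Hxi1.

Lemma dmin_ex : exists d : R, [/\ 0 < d, d <= 1 &
  forall s a1 a2 x, delta G s a1 a2 x != 0 -> d <= delta G s a1 a2 x].
Proof.
case: HG => _ [_ [Hd Hs]].
pose f (i : S * M * M * S) := delta G i.1.1.1 i.1.1.2 i.1.2 i.2.
exists (\big[Num.min/1]_(i | f i != 0) f i); split.
- apply: (big_ind (fun x => 0 < x)) => //.
    by move=> x y hx hy; rewrite lt_min hx hy.
  by move=> i Hi; rewrite lt_def Hi Hd.
- apply: (big_ind (fun x => x <= 1)) => //.
    by move=> x y hx _; rewrite ge_min hx.
  move=> i _; rewrite /f -(Hs i.1.1.1 i.1.1.2 i.1.2).
  exact: (@le_sum1 _ _ (fun x => delta G i.1.1.1 i.1.1.2 i.1.2 x) i.2).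
- move=> s a1 a2 x Hx; rewrite (bigD1 (s, a1, a2, x)) //=.
  by rewrite ge_min lexx.
Qed.


Variables (d : R) (Hd0 : 0 < d) (Hd1 : d <= 1)
  (Hdmin : forall s a1 a2 x, delta G s a1 a2 x != 0 -> d <= delta G s a1 a2 x)
  (Hcard : (0 < #|M|)%N).

Let p := d / #|M|%:R.

Lemma p_gt0 : 0 < p.
Proof. by rewrite divr_gt0 // ltr0n. Qed.

Lemma p_le1 : p <= 1.
Proof.
rewrite ler_pdivrMr ?ltr0n // mul1r; apply: (le_trans Hd1).
by rewrite (ler_nat R 1).
Qed.

Lemma LB (Y : {set S}) s0 r : last s0 r \notin Xs G T -> last s0 r \in Pre G Y ->
  p <= \sum_x step_prob G pi1 pi2 s0 r x * (x \in Y)%:R.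
Proof.
move=> HX HP.
case: HG => HG1 [_ [Hd _]].
have [X0 [_ _]] := Hxi1 (last s0 r).
have [P0 [P2 S2]] := H2 s0 r.
set s := last s0 r in HX HP X0.
pose F a2 a1 x := xi1 s a1 * pi2 s0 r a2 * delta G s a1 a2 x * (x \in Y)%:R.
have F0 : forall a2 a1 x, 0 <= F a2 a1 x by move=> *; rewrite !mulr_ge0 ?ler0n.
have E : \sum_a2 \sum_a1 \sum_x F a2 a1 x =
   \sum_x step_prob G pi1 pi2 s0 r x * (x \in Y)%:R.
  rewrite exchange_big /=.
  rewrite (eq_bigr (fun a1 => \sum_x \sum_a2 F a2 a1 x)); last first.
    by move=> a1 _; rewrite exchange_big.
  rewrite exchange_big /=; apply: eq_bigr => x _.
  rewrite /step_prob mulr_suml; apply: eq_bigr => a1 _.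
  by rewrite mulr_suml.
rewrite -E -[p]mul1r -S2 mulr_suml; apply: ler_sum => a2 _.
case: (boolP (a2 \in Gamma2 G s)) => Ha2; last first.
  by rewrite P2 // mul0r; apply: sumr_ge0 => a1 _; apply: sumr_ge0.
move: HP; rewrite inE => /forall_inP /(_ a2 Ha2) /exists_inP [a1 Ha1 /exists_inP [x Hx Hdx]].
apply: le_trans (le_sum1 a1 (fun j => sumr_ge0 _ (fun x _ => F0 a2 j x))).
apply: le_trans (le_sum1 x (fun j => F0 a2 a1 j)).
rewrite /F Hx mulr1 (Hunif HX) Ha1 [_ * pi2 _ _ _]mulrC -mulrA.
apply: ler_wpM2l => //.
rewrite /p mulrC; apply: ler_pM => //; first by rewrite invr_ge0 ler0n.
  exact: ltW.
have Hc : (0 < #|Gamma1 G s|)%N by apply/card_gt0P; exists a1.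
  rewrite lef_pV2 ?posrE ?ltr0n // ?ler_nat ?max_card //.
exact: Hdmin.
Qed.

Lemma Aw_decr X s0 r n : Aw G pi1 pi2 X s0 r n.+1 <= Aw G pi1 pi2 X s0 r n.
Proof.
elim: n r => [|n IH] r.
  rewrite AwS Aw0; case: ifP => // _; rewrite -(step_sum HG H1 H2 s0 r).
  apply: ler_sum => x _; apply: ler_piMr; [exact: step_ge0 | exact: Aw_le1].
rewrite AwS [in X in _ <= X]AwS; case: ifP => // _; apply: ler_sum => x _.
by apply: ler_wpM2l; [exact: step_ge0 | exact: IH].
Qed.

Lemma claim1 s0 k r : last s0 r \in iter k (Fm G T) finset.set0 ->
  Aw G pi1 pi2 (Xs G T) s0 r k <= 1 - p ^+ k.
Proof.
have pk0 : forall k, 0 <= p ^+ k by move=> j; rewrite exprn_ge0 // ltW // p_gt0.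
have pk1 : forall k, p ^+ k <= 1 by move=> j; apply: exprn_ile1; [exact: (ltW p_gt0) | exact: p_le1].
elim: k r => [|k IH] r /=; first by rewrite finset.in_set0.
case: (boolP (last s0 r \in Xs G T)) => HX.
  by move=> _; rewrite AwS HX subr_ge0.
move/finset.setUP => [/finset.setUP [HX'|HY]|HP]; first by rewrite HX' in HX.
  apply: le_trans (Aw_decr _ _ _ _) _; apply: le_trans (IH _ HY) _.
  by rewrite lerD2l lerN2 exprS ler_piMl ?p_le1.
rewrite AwS (negbTE HX).
set Yk := iter k (Fm G T) finset.set0 in IH HP *.
have Hb : forall x, Aw G pi1 pi2 (Xs G T) s0 (rcons r x) k <= 1 - p ^+ k * (x \in Yk)%:R.
  move=> x; case: (boolP (x \in Yk)) => Hx.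
    by rewrite mulr1; apply: IH; rewrite last_rcons.
  by rewrite mulr0 subr0; apply: Aw_le1.
apply: le_trans (ler_sum _ (fun x _ => ler_wpM2l (step_ge0 HG H1 H2 s0 r x) (Hb x))) _.
under eq_bigr do rewrite mulrBr mulr1.
rewrite sumrB (step_sum HG H1 H2) lerD2l lerN2.
under eq_bigr do rewrite mulrCA.
rewrite -mulr_sumr exprSr; apply: ler_wpM2l => //.
exact: LB.
Qed.

Lemma claimN s0 r : Aw G pi1 pi2 (Xs G T) s0 r #|S| <= 1 - p ^+ #|S|.
Proof. apply: claim1; by have := Yf_all T HG Hxi1 (last s0 r). Qed.

Lemma claimPow s0 k r : Aw G pi1 pi2 (Xs G T) s0 r (k * #|S|) <= (1 - p ^+ #|S|) ^+ k.
Proof.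
have c0 : 0 <= 1 - p ^+ #|S| by rewrite subr_ge0; apply: exprn_ile1; [exact: (ltW p_gt0) | exact: p_le1].
elim: k r => [|k IH] r; first by rewrite mul0n expr0; apply: Aw_le1.
rewrite mulSnr; apply: le_trans (Aw_mul HG H1 H2 c0 (claimN s0) (k * #|S|) r) _.
by rewrite exprS; apply: ler_wpM2l.
Qed.

Lemma Pr_one s : Pr_reach G pi1 pi2 (T :|: W2 G T) s = 1.
Proof.
rewrite /Pr_reach -/(Xs G T).
set f := reach_within G pi1 pi2 (Xs G T) s.
have Hf : forall n, f n = 1 - Aw G pi1 pi2 (Xs G T) s [::] n.
  by move=> n; rewrite /f reach_Aw.
have Hub : has_ubound (range f).
  by exists 1 => y [n _ <-]; rewrite Hf lerBlDr lerDl Aw_ge0.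
apply/eqP; rewrite eq_le; apply/andP; split.
  apply: ge_sup; first by exists (f 0%N); exists 0%N.
  by move=> y [n _ <-]; rewrite Hf lerBlDr lerDl Aw_ge0.
apply/ler_addgt0Pr => e e0.
set q := p ^+ #|S|.
have q0 : 0 < q by rewrite exprn_gt0 // p_gt0.
have q1 : q <= 1 by apply: exprn_ile1; [exact: (ltW p_gt0) | exact: p_le1].
pose k := Num.Def.archi_bound ((e * q)^-1).
have Hk : (e * q)^-1 < k%:R by apply: archi_boundP; rewrite invr_ge0 ltW // mulr_gt0.
have Hk' : 1 < e * (k%:R * q).
  have := Hk; rewrite -(ltr_pM2l (mulr_gt0 e0 q0)) mulfV ?gt_eqF ?mulr_gt0 //.
  by rewrite mulrAC -mulrA.
have B := bern k (ltW q0) q1.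
have Hck : (1 - q) ^+ k < e.
  have y0 : 0 <= (1 - q) ^+ k by rewrite exprn_ge0 // subr_ge0.
  have z0 : 0 <= k%:R * q by rewrite mulr_ge0 ?ler0n ?ltW.
  move: B Hk' y0 z0; move: ((1 - q) ^+ k) (k%:R * q) => y z; nra.
have Hmem : range f (f (k * #|S|)%N) by exists (k * #|S|)%N.
apply: le_trans (lerD (ub_le_sup Hub Hmem) (lexx e)).
rewrite Hf; have := claimPow s k [::]; rewrite -/q; lra.
Qed.

End Main.

Theorem lemma2 (R : realType) (S M : finType) (G : cgs R S M) (T : {set S})
  (xi1 : selector R S M) :
  cgs_valid G ->
  (forall s, s \in T :|: W2 G T -> absorbing G s) ->
  selector_valid (Gamma1 G) xi1 ->
  (forall s, s \notin T :|: W2 G T ->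
     forall a, xi1 s a = if a \in Gamma1 G s then (#|Gamma1 G s|%:R)^-1 else 0) ->
  proper_selector G T xi1.
Proof.
move=> HG _ Hxi1 Hunif pi2 H2 s Hs.
have [d [Hd0 Hd1 Hdmin]] := dmin_ex HG.
have Hcard : (0 < #|M|)%N.
  case: HG => HG1 _; have /set0Pn [a _] := HG1 s.
  by apply/card_gt0P; exists a.
exact: (Pr_one HG Hxi1 Hunif H2 Hd0 Hd1 Hdmin Hcard s).
Qed.
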